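(* Let $X$ be a compact metric space and $f_{1,\infty}=\{f_n\}$ an equicontinuous sequence of continuous maps $f_n:X\to X$, and let $\mu_{1,\infty}=\{\mu_n\}$ be a sequence of Borel probability measures on $X$ with $f_n\mu_n=\mu_{n+1}$ for all $n$. If the closure of $\{\mu_n\}$ with respect to the strong topology on the space of Borel probability measures is compact, then the Misiurewicz class $\mathcal{E}_{\mathrm{M}}$ contains all constant sequences $\mathcal{P}_n\equiv\mathcal{P}$, $\mathcal{P}$ a finite Borel partition of $X$.
   Context: The strong topology on Borel probability measures is the topology of setwise convergence: $\mu_\alpha\to\mu$ iff $\mu_\alpha(A)\to\mu(A)$ for every Borel set $A$. Equicontinuity: for every $\varepsilon>0$ there is $\delta>0$ with $\varrho(f_nx,f_ny)<\varepsilon$ whenever $\varrho(x,y)<\delta$, for all $n$. Misiurewicz class $\mathcal{E}_{\mathrm{M}}$ (for the system with $X_n=X$ and measures $\mu_n$): the set of sequences $\{\mathcal{P}_n\}$ of finite Borel partitions $\mathcal{P}_n=\{P_{n,1},\dots,P_{n,k_n}\}$ of $X$ with $\sup_nk_n<\infty$ such that for every $\varepsilon>0$ there exist $\delta>0$ and compact sets $C_{n,i}\subset P_{n,i}$ with, for all $n$: (a) $\mu_n(P_{n,i}\setminus C_{n,i})\le\varepsilon$; (b) $\varrho(x,y)\ge\delta$ for all $x\in C_{n,i}$, $y\in C_{n,j}$, $i\neq j$. *)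

(* Defs.v *)
From HB Require Import structures.
From mathcomp Require Import all_boot all_order all_algebra.
From mathcomp Require Import all_classical all_reals all_analysis.
Set Implicit Arguments. Unset Strict Implicit. Unset Printing Implicit Defensive.
Import Order.TTheory GRing.Theory Num.Theory.
Import numFieldNormedType.Exports.
Local Open Scope classical_set_scope.
Local Open Scope ring_scope.

(* A (nonempty) metric space: a metricType (distance [mdist], topology
   induced by the balls of [mdist]) with a distinguished point, needed to
   build the Borel measurable type. *)
#[short(type="pmetricType")]
HB.structure Definition PointedMetric (R : numDomainType) :=
  { M of Pointed M & Metric R M }.

Definition borel {R : realType} (X : pmetricType R) :=
  g_sigma_algebraType (@open X).

Definition borel_partition {R : realType} {X : pmetricType R} (k : nat)
  (P : 'I_k -> set X) : Prop :=
  (forall i, measurable (P i : set (borel X))) /\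
  (forall i j, i != j -> P i `&` P j = set0) /\
  (\bigcup_i P i = [set: X]).

Definition equicontinuous_seq {R : realType} {X : pmetricType R}
  (f : nat -> X -> X) : Prop :=
  forall eps : R, 0 < eps -> exists delta : R, 0 < delta /\
    forall n (x y : X), mdist x y < delta -> mdist (f n x) (f n y) < eps.

(* Strong (setwise) topology on Borel probability measures: it is the
   initial topology of the evaluations mu |-> mu(A), A Borel.  We realize it
   as the subspace topology of the image of the (Borel-restricted)
   evaluation map in the product (pointwise) topology on set X -> R. *)
Definition strong_embed {R : realType} {X : pmetricType R}
  (mu : probability (borel X) R) : {ptws set X -> R} :=
  fun A => if `[< measurable (A : set (borel X)) >] then fine (mu A) else 0.

(* The strong closure of {mu_n} (closure taken inside the space of Borel
   probability measures) is compact. *)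
Definition strong_closure_compact {R : realType} {X : pmetricType R}
  (mu : nat -> probability (borel X) R) : Prop :=
  compact (closure (range (strong_embed \o mu)) `&` range (@strong_embed R X)).

Definition misiurewicz_class {R : realType} {X : pmetricType R}
  (mu : nat -> probability (borel X) R)
  (k : nat -> nat) (P : forall n, 'I_(k n) -> set X) : Prop :=
  (forall n, borel_partition (P n)) /\
  (exists K, forall n, (k n <= K)%N) /\
  forall eps : R, 0 < eps -> exists delta : R, 0 < delta /\
    exists C : forall n, 'I_(k n) -> set X,
      forall n,
        (forall i, compact (C n i) /\ C n i `<=` P n i /\
           (mu n (P n i `\` C n i) <= eps%:E)%E) /\
        (forall i j, i != j -> forall x y, C n i x -> C n j y ->
           delta <= mdist x y).
Arguments misiurewicz_class {R X} mu k P.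

(* Main.v *)
Require Import Defs.
From HB Require Import structures.
From mathcomp Require Import all_boot all_order all_algebra.
From mathcomp Require Import all_classical all_reals all_analysis.
From mathcomp Require Import lra.
Import Order.TTheory GRing.Theory Num.Theory.
Import numFieldNormedType.Exports.
Local Open Scope classical_set_scope.
Local Open Scope ring_scope.

Section reg.
Context (R : realType) (X : pmetricType R) (mu : probability (borel X) R).

Lemma open_meas (U : set X) : open U -> measurable (U : set (borel X)).
Proof. move=> oU; exact: sub_sigma_algebra. Qed.

Lemma closed_meas (U : set X) : closed U -> measurable (U : set (borel X)).
Proof.
move=> cU; rewrite -[U]setCK; apply: measurableC; apply: open_meas.
by rewrite openC.
Qed.

Lemma cvg0_lt (u : nat -> \bar R) (e : R) : u @ \oo --> 0%E -> (0 < e)%R ->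
  exists N, (u N < e%:E)%E.
Proof.
move=> uc e0; apply: contrapT => H.
have : (e%:E <= 0)%E.
  apply: (cvge_ge _ uc); apply: nearW => n.
  by rewrite leNgt; apply/negP => h; apply: H; exists n.
by rewrite lee_fin leNgt e0.
Qed.

Definition reg (A : set X) := forall e : R, (0 < e)%R -> exists F U : set X,
  [/\ closed F, open U, F `<=` A, A `<=` U & (mu (U `\` F) < e%:E)%E].


Lemma prob_fin (A : set X) : measurable (A : set (borel X)) -> (mu A < +oo)%E.
Proof. by move=> mA; rewrite (le_lt_trans (probability_le1 _ mA))// ltry. Qed.

Lemma open_reg (U : set X) : open U -> reg U.
Proof.
move=> oU e e0.
pose S N := [set x : X | ball x (N.+1%:R^-1) `<=` U].
pose F N := closure (S N).
have FU N : F N `<=` U.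
  move=> y Fy; have [x [Sx /ball_sym bx]] := Fy _ (nbhsx_ballx y (N.+1%:R^-1) ltac:(by [])).
  exact: Sx.
have FS m n : (m <= n)%N -> F m `<=` F n.
  move=> mn; apply: closureS => w Sw z bz; apply: Sw.
  apply: le_ball bz; rewrite lef_pV2 ?posrE ?ltr0n ?ler_nat ?ltnS//.
have FC N : closed (F N) by exact: closed_closure.
pose G N := U `\` F N.
have mG N : measurable (G N : set (borel X)).
  by apply: measurableD; [exact: open_meas | exact: closed_meas].
have G0 : \bigcap_N G N = set0.
  apply/seteqP; split => // x Gx.
  have [Ux _] := Gx 0%N I.
  have : nbhs x U by apply: open_nbhs_nbhs.
  case/nbhs_ballP => r r0 rU.
  pose N := Num.truncn (r^-1).
  have hN : N.+1%:R^-1 < r.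
    rewrite -[r]invrK ltf_pV2 ?posrE ?ltr0n ?invr_gt0//; exact: (truncnS_gt r^-1).
  have [_ nF] := Gx N I; exfalso; apply: nF; apply: subset_closure => z bz.
  apply: rU; apply: le_ball bz; exact: ltW.
have cv := nonincreasing_cvg_mu (prob_fin _ (mG 0%N)) mG.
rewrite G0 measure0 in cv.
have nG : {homo G : n m / (n <= m)%N >-> (m <= n)%O}.
  move=> m n mn; apply/subsetPset => x [Ux nF]; split => // Fx; apply: nF.
  exact: FS Fx.
have [N HN] := cvg0_lt _ _ (cv measurable0 nG) e0.
by exists (F N), U; split => //; exact: FU.
Qed.


Lemma reg_sigma : sigma_algebra setT reg.
Proof.
split.
- move=> e e0; exists set0, set0; split => //; first exact: closed0.
  exact: open0. by rewrite setD0 measure0 lte_fin.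
- move=> A rA e e0; have [F [U [cF oU FA AU muUF]]] := rA e e0.
  exists (~` U), (~` F); split.
  + by rewrite closedC.
  + by rewrite openC.
  + by move=> x nU; split => // Ax; apply: nU; exact: AU.
  + by move=> x [_ nA] Fx; apply: nA; exact: FA.
  + by rewrite (_ : ~` F `\` ~` U = U `\` F)// !setDE setCK setIC.
move=> A rA e e0.
have e2 : (0 < e / 2)%R by rewrite divr_gt0.
have epos n : (0 < e / 2 / (2 ^ n.+1)%:R)%R by rewrite divr_gt0// ltr0n expn_gt0.
have : forall n, exists p : set X * set X, [/\ closed p.1, open p.2, p.1 `<=` A n,
   A n `<=` p.2 & (mu (p.2 `\` p.1) < (e / 2 / (2 ^ n.+1)%:R)%:E)%E].
  by move=> n; have [F [U H]] := rA n _ (epos n); exists (F, U).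
case/choice => p Hp.
pose Fn n := (p n).1; pose Un n := (p n).2.
have cFn n : closed (Fn n) by have [] := Hp n.
have oUn n : open (Un n) by have [] := Hp n.
pose H := \bigcup_n Fn n.
pose GN N := \bigcup_(i in `I_N) Fn i.
have cGN N : closed (GN N) by apply: closed_bigcup => //; exact: finite_II.
pose D N := H `\` GN N.
have mH : measurable (H : set (borel X)).
  by apply: bigcupT_measurable => i; exact: closed_meas.
have mD N : measurable (D N : set (borel X)).
  by apply: measurableD => //; exact: closed_meas.
have D0 : \bigcap_N D N = set0.
  apply/seteqP; split => // x Dx; exfalso.
  have [[m _ Fx] _] := Dx 0%N I.
  have [_ nG] := Dx m.+1 I; apply: nG; exists m => //=.
have nD : {homo D : n m / (n <= m)%N >-> (m <= n)%O}.
  move=> m n mn; apply/subsetPset => x [Hx nG]; split => // -[i im Fx].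
  apply: nG; exists i => //=; move: im; rewrite /= => im; exact: leq_trans im mn.
have cv := nonincreasing_cvg_mu (prob_fin _ (mD 0%N)) mD.
rewrite D0 measure0 in cv.
have [N HN] := cvg0_lt _ _ (cv measurable0 nD) e2.
exists (GN N), (\bigcup_n Un n); split => //.
- by apply: bigcup_open => i _.
- move=> x [i _ Fx]; exists i => //; have [_ _ + _ _] := Hp i; exact.
- move=> x [i _ Ax]; exists i => //; have [_ _ _ + _] := Hp i; exact.
pose V n := Un n `\` Fn n.
have mV n : measurable (V n : set (borel X)).
  by apply: measurableD; [exact: open_meas | exact: closed_meas].
have mU : measurable ((\bigcup_n Un n) `\` GN N : set (borel X)).
  by apply: measurableD; [apply: open_meas; exact: bigcup_open | exact: closed_meas].
have mVU : measurable (\bigcup_n V n : set (borel X)) by exact: bigcupT_measurable.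
have sub : (\bigcup_n Un n) `\` GN N `<=` (\bigcup_n V n) `|` D N.
  move=> x [[m _ Ux] nG]; have [Fx|nF] := pselect (Fn m x).
    by right; split => //; exists m.
  by left; exists m.
have mVD : measurable ((\bigcup_n V n) `|` D N : set (borel X)) by apply: measurableU.
have le1 := le_measure mu (mem_set mU) (mem_set mVD) sub.
have le2 : (mu ((\bigcup_n V n) `|` D N) <= mu (\bigcup_n V n) + mu (D N))%E by apply: measureU2.
have le3 : (mu (\bigcup_n V n) <= (e / 2)%:E)%E.
  apply: le_trans (measure_sigma_subadditive mu mV mVU (@subset_refl _ _)) _.
  apply: le_trans (epsilon_trick0 xpredT (ltW e2)).
  apply: lee_nneseries => // n _; by have [_ _ _ _ /ltW] := Hp n.
have fin : mu (\bigcup_n V n) \is a fin_num by exact: fin_num_measure.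
apply: (le_lt_trans le1); apply: (le_lt_trans le2).
rewrite [in X in (_ < X)%E](splitr e) EFinD.
exact: lee_ltD.
Qed.


Lemma meas_reg (A : set X) : measurable (A : set (borel X)) -> reg A.
Proof.
move=> mA; apply: (smallest_sub reg_sigma _ mA) => U oU; exact: open_reg.
Qed.

Lemma inner_compact (A : set X) : compact [set: X] ->
  measurable (A : set (borel X)) -> forall e : R, (0 < e)%R ->
  exists C, [/\ compact C, C `<=` A & (mu (A `\` C) < e%:E)%E].
Proof.
move=> cX mA e e0; have [F [U [cF oU FA AU muUF]]] := meas_reg _ mA _ e0.
exists F; split => //; first exact: subclosed_compact cX _.
apply: le_lt_trans muUF; apply: le_measure; rewrite ?inE.
- by apply: measurableD => //; exact: closed_meas.
- by apply: measurableD; [exact: open_meas | exact: closed_meas].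
- by move=> x [Ax nF]; split => //; exact: AU.
Qed.

End reg.
Lemma sep_compact (R : realType) (X : pmetricType R) (A B : set X) :
  compact A -> closed B -> A `&` B = set0 ->
  \forall d \near (0:R)^'+, forall x y, A x -> B y -> d <= mdist x y.
Proof.
move=> cA cB AB.
suff H : \forall d \near (0:R)^'+, A `<=` (fun x => forall y, B y -> d <= mdist x y).
  by apply: filterS H => d Hd x y Ax By; exact: Hd.
apply: (proj1 (compact_near_coveringP A) cA) => x Ax.
  have nB : ~ B x by move=> Bx; have : (A `&` B) x by []; rewrite AB.
  have : nbhs x (~` B) by apply: open_nbhs_nbhs; split => //; rewrite openC.
  case/nbhs_ballP => r r0 rB.
  near=> x' d => y By.
  have h1 : r <= mdist x y.
    rewrite leNgt; apply/negP => hr; apply: (rB y) => //.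
    by rewrite ballEmdist.
  have h2 : mdist x x' < r / 2.
    near: x'; apply/nbhs_ballP; exists (r/2); first exact: divr_gt0.
    by move=> z; rewrite ballEmdist.
  have h3 : d <= r / 2.
    near: d; apply: nbhs_right_le; exact: divr_gt0.
  have := metric_triangle x x' y.
  rewrite /=; lra.
Unshelve. all: end_near. Qed.

Lemma eval_near (R : realType) (X : pmetricType R) (g : {ptws set X -> R}) (A : set X) (e : R) :
  g A < e -> \forall g' \near g, g' A < e.
Proof.
move=> gA.
have := @proj_continuous (set X) (fun _ : set X => R) A g.
move=> /(_ [set r | r < e]) H; apply: H.
apply: open_nbhs_nbhs; split => //; exact: open_lt.
Qed.

Theorem mainTheorem16 (R : realType) (X : pmetricType R)
  (f : nat -> X -> X) (mu : nat -> probability (borel X) R) :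
  compact [set: X] ->
  (forall n, continuous (f n)) ->
  equicontinuous_seq f ->
  (forall n (A : set (borel X)), measurable A ->
     mu n.+1 A = mu n (f n @^-1` A)) ->
  strong_closure_compact mu ->
  forall (k : nat) (P : 'I_k -> set X), borel_partition P ->
    misiurewicz_class mu (fun _ => k) (fun _ => P).
Proof.
move=> cX _ _ _ cK k P [mP [dP cP]].
split; first by move=> n; split.
split; first by exists k.
move=> eps eps0.
pose K := closure (range (strong_embed \o mu)) `&` range (@strong_embed R X).
pose Q (d : R) (g : {ptws set X -> R}) := exists C : 'I_k -> set X,
   (forall i, [/\ compact (C i), C i `<=` P i & g (P i `\` C i) < eps]) /\
   (forall i j, i != j -> forall x y, C i x -> C j y -> d <= mdist x y).
have H : \forall d \near (0:R)^'+, K `<=` Q d.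
  apply: (proj1 (compact_near_coveringP K) cK) => g [_ [lam _ <-]].
  have : forall i, exists C, [/\ compact C, C `<=` P i &
      (lam (P i `\` C) < eps%:E)%E].
    move=> i; exact: inner_compact.
  case/choice => C HC.
  have cC i : compact (C i) by have [] := HC i.
  have sC i : C i `<=` P i by have [] := HC i.
  have mD i : measurable (P i `\` C i : set (borel X)).
    apply: measurableD => //; apply: closed_meas.
    exact: compact_closed (@metric_hausdorff _ X) (cC i).
  have sepC : \forall d \near (0:R)^'+, forall i j, i != j ->
      forall x y, C i x -> C j y -> d <= mdist x y.
    apply: filter_forall => i; apply: filter_forall => j.
    have [->|ij] := eqVneq i j.
      by apply: nearW => d.
    have : \forall d \near (0:R)^'+, forall x y, C i x -> C j y -> d <= mdist x y.
      apply: sep_compact => //.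
        exact: compact_closed (@metric_hausdorff _ X) (cC j).
      apply/seteqP; split => // x [/sC Pix /sC Pjx].
      by have := dP i j ij; rewrite -/(_ `&` _) => E; rewrite -E.
    by apply: filterS => d Hd _.
  have evC : \forall g' \near (strong_embed lam : {ptws set X -> R}),
      forall i, g' (P i `\` C i) < eps.
    have FF := @filter_forall _ 'I_k (fun i (g' : {ptws set X -> R}) => g' (P i `\` C i) < eps) (nbhs (strong_embed lam : {ptws set X -> R})) _.
    apply: FF => i.
    apply: eval_near.
    rewrite /strong_embed asboolT //.
    have [_ _ h] := HC i.
    have fin : lam (P i `\` C i) \is a fin_num by exact: fin_num_measure.
    by rewrite -lte_fin fineK.
  near=> g' d; exists C => /=; split; last by near: d; exact: sepC.
  have Hg : forall i, g' (P i `\` C i) < eps by near: g'; exact: evC.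
  by move=> i; split => //; exact: Hg.
have HH : \forall d \near (0:R)^'+, K `<=` Q d /\ 0 < d.
  by apply: filterI H (nbhs_right_gt 0).
have := filter_ex HH; move=> /(_ (at_right_proper_filter (0:R))) [d [Kd d0]].
exists d; split => //.
have : forall n, Q d (strong_embed (mu n)).
  move=> n; apply: Kd; split; last by exists (mu n).
  by apply: subset_closure; exists n.
move=> /(_ _) HQ; have /choice [C HC] := HQ.
exists C => n; have [HC1 HC2] := HC n; split => // i.
have [cCi sCi hi] := HC1 i; split => //; split => //.
have mD : measurable (P i `\` C n i : set (borel X)).
  apply: measurableD => //; apply: closed_meas.
  exact: compact_closed (@metric_hausdorff _ X) cCi.
move: hi; rewrite /strong_embed asboolT // => hi.
have fin : mu n (P i `\` C n i) \is a fin_num by exact: fin_num_measure.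
by rewrite -(fineK fin) lee_fin ltW.
Unshelve. all: end_near. Qed.
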